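(* Let $K$ be a number field and let $\alpha=p/q$ be a positive rational number with $\gcd(p,q)=1$ which is not an integer and is not of the form $1/n$ for an integer $n$. Let $F\in K((x))$ be a Laurent series such that there exist $d\ge 0$ and polynomials $P_0,\dots,P_d\in K[x]$ with $P_d\ne0$ and $\sum_{i=0}^d P_i(x)F(x^{\alpha^i})=0$. Then $F(x^{\alpha^i})$ is a Laurent series (i.e. has support contained in $\mathbb{Z}$ and bounded below) for each $i=0,1,\dots,d$.
   Context: For a Laurent series $F=\sum_i f_ix^i$ and $\gamma>0$, $F(x^\gamma)=\sum_i f_i x^{\gamma i}$, regarded as a Hahn series (formal series with well-ordered support in $\mathbb{R}$); the equation holds in the field of such Hahn series over $K$. *)

(* Defs.v *)
From HB Require Import structures.
From mathcomp Require Import all_boot all_order all_algebra all_field.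
Set Implicit Arguments. Unset Strict Implicit. Unset Printing Implicit Defensive.
Import Order.TTheory GRing.Theory Num.Theory.
Local Open Scope ring_scope.

(* A Laurent series F = sum_n f_n x^n in K((x)) is given by its coefficient
   function f : int -> K together with a lower bound on its support. *)
Definition laurent_support_bounded (K : fieldType) (f : int -> K) : Prop :=
  exists N : int, forall n : int, n < N -> f n = 0.

(* Coefficient function (on rational exponents) of the Hahn series F(x^g)
   = sum_n f_n x^(g n): the coefficient at exponent r is f_(r/g) if r/g is
   an integer and 0 otherwise (g > 0). *)
Definition subst_coef (K : fieldType) (f : int -> K) (g : rat) (r : rat) : K :=
  if denq (r / g) == 1 then f (numq (r / g)) else 0.

Definition polyMul_coef (K : fieldType) (P : {poly K}) (h : rat -> K) (e : rat) : K :=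
  \sum_(k < size P) P`_k * h (e - k%:R).

Definition is_laurent_series (K : fieldType) (h : rat -> K) : Prop :=
  (forall r : rat, h r != 0 -> r \is a Num.int) /\
  (exists N : rat, forall r : rat, r < N -> h r = 0).

(* Main.v *)
Require Import Defs.
From HB Require Import structures.
From mathcomp Require Import all_boot all_order all_algebra all_field.
From mathcomp Require Import zify ring.
From Stdlib Require Import Classical.
Import Order.TTheory GRing.Theory Num.Theory.
Local Open Scope ring_scope.

Lemma min_nat {P : nat -> Prop} : (exists n, P n) ->
  exists n, P n /\ forall m, (m < n)%N -> ~ P m.
Proof.
move=> [n Pn].
suff H : forall b n, (n <= b)%N -> P n -> exists n, P n /\ forall m, (m < n)%N -> ~ P m.
  exact: (H n n (leqnn n) Pn).
elim=> [|b IH] k kb Pk.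
  exists k; split=> // m; rewrite (_ : k = 0%N) //; lia.
case: (classic (exists m, (m < k)%N /\ P m)) => [[m [mk Pm]]|H].
  apply: (IH m) => //; lia.
exists k; split=> // m mk Pm; apply: H; by exists m.
Qed.

Lemma min_int (Q : int -> Prop) (N : int) : (forall n, Q n -> N <= n) ->
  (exists n, Q n) -> exists n, Q n /\ forall m, Q m -> n <= m.
Proof.
move=> HN [n Qn].
have ex : exists k : nat, exists n, Q n /\ n = N + k%:Z.
  exists `|n - N|%N; exists n; split=> //; have := HN n Qn; lia.
have [k [[n' [Qn' E]] Hk]] := min_nat ex.
exists n'; split=> // m Qm.
have := HN m Qm => Hm.
have : ~ (`|m - N| < k)%N.
  move=> /Hk; apply; exists m; split=> //; lia.
lia.
Qed.

Lemma eq_to_int (p q n m : int) (k0 k i j : nat) : q != 0 ->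
  (p%:~R / q%:~R : rat)^+(i+j) * n%:~R + k0%:R - k%:R = (p%:~R/q%:~R : rat)^+i * m%:~R ->
  p^+(i+j) * n + (k0%:Z - k%:Z) * q^+(i+j) = p^+i * q^+j * m.
Proof.
move=> q0 E; apply: (@intr_inj rat).
rewrite !rmorphD !rmorphM /= !rmorphXn /= rmorphB /=.
have q0' : (q%:~R : rat) != 0 by rewrite intr_eq0.
move: E; rewrite !expr_div_n !exprD => E.
have qi : (q%:~R : rat)^+i != 0 by rewrite expf_neq0.
have qj : (q%:~R : rat)^+j != 0 by rewrite expf_neq0.
have -> : ((k0%:Z)%:~R : rat) = k0%:R by [].
have -> : ((k%:Z)%:~R : rat) = k%:R by [].
rewrite [RHS](_ : _ = (p%:~R ^+ i / q%:~R ^+ i * m%:~R) * (q%:~R ^+ i * q%:~R ^+ j)); last by field.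
rewrite -E; field; by apply/andP; split.
Qed.

Lemma divA (L p q m : int) (w i j : nat) : (L^+w %| m)%Z -> (L %| q)%Z -> (0 < j)%N ->
  (L^+(w.+1) %| p^+i * q^+j * m)%Z.
Proof.
move=> Hm Hq j0; rewrite -mulrA exprS; apply: dvdz_mull; apply: dvdz_mul => //.
exact: dvdz_exp.
Qed.

Lemma divB (L p q n c : int) (t d : nat) : coprimez L p -> (L^+t %| q^+d)%Z ->
  ~~ (L^+t %| n)%Z -> ~~ (L^+t %| p^+d * n + c * q^+d)%Z.
Proof.
move=> cop Hq Hn; apply/negP => H.
have H2 : (L^+t %| p^+d * n)%Z.
  by rewrite -(rpredDr _ (dvdz_mull c Hq)).
move: H2; rewrite Gauss_dvdzr ?(negbTE Hn) //.
by apply: coprimezXl; apply: coprimezXr.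
Qed.

Theorem mainTheorem5 (K : fieldExtType rat) (alpha : rat)
    (f : int -> K) (d : nat) (P : nat -> {poly K}) :
  0 < alpha ->
  alpha \isn't a Num.int ->
  alpha^-1 \isn't a Num.int ->
  laurent_support_bounded f ->
  P d != 0 ->
  (forall e : rat,
     \sum_(i < d.+1) polyMul_coef (P i) (subst_coef f (alpha ^+ i)) e = 0) ->
  forall i : nat, (i <= d)%N -> is_laurent_series (subst_coef f (alpha ^+ i)).
Proof.
move=> a0 anint ainv [N fN] Pd0 Heq.
set p := numq alpha; set q := denq alpha.
have q0 : 0 < q := denq_gt0 _.
have p0 : 0 < p by rewrite numq_gt0.
have aE : alpha = p%:~R / q%:~R by rewrite divq_num_den.
have getm : forall (r : rat) (i : nat), denq (r / alpha ^+ i) = 1 ->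
    r = alpha ^+ i * (numq (r / alpha ^+ i))%:~R.
  move=> r i den1.
  have : (r / alpha ^+ i) \is a Num.int by rewrite Qint_def den1.
  move=> /intrP [m hm]; rewrite hm numq_int -hm mulrC divfK //.
  by rewrite expf_neq0 // gt_eqF.
have key : forall m, f m != 0 -> (q^+d %| m)%Z.
  move=> n0 fn0; apply/negPn/negP => ndiv.
  set Q := `|q ^+ d|%N.
  have Q0 : (0 < Q)%N by rewrite absz_gt0 expf_neq0 // gt_eqF.
  have : ~ (forall l, l \in \pi(Q) -> (Q`_l %| `|n0|)%N).
    by move/(dvdn_partP _ Q0); rewrite -dvdzE (negbTE ndiv).
  move=> Hn; have [l Hl] := not_all_ex_not _ _ Hn.
  have [lpi lndiv] := imply_to_and _ _ Hl.
  move: (lpi); rewrite mem_primes => /and3P [lpr _ ldQ].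
  have ldq : (l %| `|q|)%N.
    by move: ldQ; rewrite /Q abszX Euclid_dvdX // => /andP [].
  set L : int := l%:Z.
  have copL : coprimez L p.
    rewrite coprimezE /= coprime_sym; apply: (coprime_dvdr ldq).
    exact: coprime_num_den.
  have LdQ : (L %| q)%Z by rewrite dvdzE.
  set t0 := logn l Q.
  have absLX : forall t, `|L ^+ t|%N = (l ^ t)%N by move=> t; rewrite abszX.
  pose Pt t := exists n, f n != 0 /\ ~~ (L^+t %| n)%Z.
  have Pt0 : Pt t0.
    exists n0; split=> //; rewrite dvdzE absLX -p_part; exact/negP.
  have [t1 [Pt1 Ht1]] := min_nat (ex_intro _ t0 Pt0).
  have t1pos : (0 < t1)%N.
    case: t1 Pt1 {Ht1} => // [[n [_]]]; by rewrite expr0 dvd1z.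
  have hall : forall m, f m != 0 -> (L^+(t1.-1) %| m)%Z.
    move=> m fm; apply/negPn/negP => nd; apply: (Ht1 t1.-1); first by rewrite prednK.
    by exists m.
  have t1t0 : (t1 <= t0)%N.
    rewrite leqNgt; apply/negP => lt; exact: (Ht1 _ lt).
  have Lt1q : (L^+t1 %| q^+d)%Z.
    rewrite dvdzE absLX -/Q; apply: dvdn_trans (pfactor_dvdnn l Q).
    exact: dvdn_exp2l.
  pose Qs n := f n != 0 /\ ~~ (L^+t1 %| n)%Z.
  have [ns [[fns nsnd] nsmin]] : exists n, Qs n /\ forall m, Qs m -> n <= m.
    apply: (@min_int Qs N) => //.
    move=> n [fn _]; rewrite leNgt; apply/negP => /fN; exact/eqP.
  have : exists k, (P d)`_k != 0.
    exists (size (P d)).-1; by rewrite -lead_coefE lead_coef_eq0.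
  move=> /min_nat [k0 [Pk0 k0min]].
  have k0lt : (k0 < size (P d))%N.
    rewrite ltnNge; apply/negP => /(nth_default 0) H; by rewrite H eqxx in Pk0.
  pose e := alpha ^+ d * ns%:~R + k0%:R.
  have term : forall (i : 'I_d.+1) (k : 'I_(size (P i))),
      (P i)`_k * subst_coef f (alpha ^+ i) (e - k%:R) != 0 ->
      i = ord_max /\ (k : nat) = k0.
    move=> i k; rewrite /subst_coef; case: ifP => [/eqP den1|]; last by rewrite mulr0 eqxx.
    have Em := getm _ _ den1.
    move: Em; set m := numq _ => Em.
    rewrite mulf_eq0 negb_or => /andP [Pk fm].
    have id : (i <= d)%N by rewrite -ltnS.
    have dE : d = (i + (d - i))%N by rewrite subnKC.
    have qn0 : q != 0 by rewrite gt_eqF.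
    move: Em; rewrite /e {1}dE aE => /(eq_to_int _ _ _ _ _ _ _ _ qn0) EZ.
    rewrite -dE in EZ.
    case: (posnP (d - i)) => [j0|jpos].
    - have iE : (i : nat) = d by apply/eqP; rewrite eqn_leq id /= -subn_eq0 j0.
      rewrite j0 expr0 mulr1 [X in _ = p ^+ X * _]iE in EZ.
      have nd : ~~ (L^+t1 %| m)%Z.
        apply/negP => Hm.
        have := divB _ _ _ _ (k0%:Z - k%:Z) _ _ copL Lt1q nsnd; rewrite EZ.
        by rewrite dvdz_mull.
      have := nsmin m (conj fm nd) => nsm.
      have A0 : 0 < p ^+ d by rewrite exprn_gt0.
      have B0 : 0 < q ^+ d by rewrite exprn_gt0.
      have kk : (k <= k0)%N.
        move: EZ A0 B0 nsm; set A := p ^+ d; set B := q ^+ d => EZ A0 B0 nsm.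
        have E2 : (k0%:Z - k%:Z) * B = A * (m - ns) by rewrite mulrBr -EZ; ring.
        have : 0 <= (k0%:Z - k%:Z) * B by rewrite E2 mulr_ge0 // ?subr_ge0 // ltW.
        rewrite pmulr_lge0 // subr_ge0 lez_nat; done.
      have Pkd : (P d)`_k != 0.
        by move: (k : nat) Pk => kn; rewrite iE.
      have kk2 : ~ (k < k0)%N by move=> /k0min; apply.
      split; first by apply: val_inj => /=.
      by apply/eqP; rewrite eqn_leq kk leqNgt; apply/negP.
    - exfalso.
      have := divB _ _ _ _ (k0%:Z - k%:Z) _ _ copL Lt1q nsnd; rewrite EZ.
      move=> H; apply: (negP H); rewrite -(prednK t1pos); apply: divA => //.
      exact: hall.
  have := Heq e.
  rewrite (bigD1 ord_max) //= big1 ?addr0; last first.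
    move=> i ni; rewrite /polyMul_coef big1 // => k _.
    apply/eqP; apply/negPn/negP => H; have [ie _] := term i k H; by rewrite ie eqxx in ni.
  rewrite /polyMul_coef (bigD1 (Ordinal k0lt)) //= big1 ?addr0; last first.
    move=> k nk; apply/eqP; apply/negPn/negP => H; have [_ ke] := term ord_max k H.
    by move: nk; rewrite -val_eqE /= ke eqxx.
  have -> : e - k0%:R = alpha ^+ d * ns%:~R by rewrite /e addrK.
  rewrite /subst_coef [alpha ^+ d * _ / _]mulrC mulKf ?denq_int ?eqxx ?numq_int; last by rewrite expf_neq0 // gt_eqF.
  by apply/eqP; rewrite mulf_neq0.
move=> i id; split.
- move=> r; rewrite /subst_coef; case: ifP => [/eqP den1 fm|]; last by rewrite eqxx.
  rewrite (getm r i den1).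
  have := key _ fm => /(dvdz_trans (dvdz_exp2l q id)) /dvdzP [t ->].
  rewrite aE rmorphM /= rmorphXn /=.
  have -> : (p%:~R / q%:~R : rat) ^+ i * (t%:~R * q%:~R ^+ i) = (t * p ^+ i)%:~R.
    rewrite rmorphM /= rmorphXn /= expr_div_n; field.
    by rewrite expf_neq0 // intr_eq0 gt_eqF.
  exact: intr_int.
- exists (alpha ^+ i * N%:~R) => r rlt; rewrite /subst_coef; case: ifP => [/eqP den1|//].
  apply: fN; move: rlt; rewrite {1}(getm r i den1) ltr_pM2l ?exprn_gt0 //.
  by rewrite ltr_int.
Qed.
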